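(* In every T2R semigroup $S=S_0\cup S_1$ with $S_1=\{u,v\}$, there is an element $b\in S_0$ such that $ub\neq b$ and $vb\neq b$.
   Context: A semigroup $S$ is a $\Delta$-semigroup if the lattice of all congruences of $S$ is a chain with respect to inclusion. A semigroup $N$ with zero $0$ is nil if every element has some power equal to $0$; non-trivial means having more than one element. A T2R semigroup is a $\Delta$-semigroup $S$ which is the disjoint union of a non-trivial nil ideal $S_0$ (with zero $0$, which is then the zero of $S$) and a subsemigroup $S_1=\{u,v\}$, $u\neq v$, which is a right zero semigroup ($xy=y$ for $x,y\in S_1$). *)

(* Defs.v *)
From Stdlib Require Import Arith.

Definition associative {T : Type} (mul : T -> T -> T) : Prop :=
  forall x y z, mul x (mul y z) = mul (mul x y) z.

(* x^n for n >= 1, with pow mul x 0 = x, i.e. pow mul x n = x^(n+1) *)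
Fixpoint pow1 {T : Type} (mul : T -> T -> T) (x : T) (n : nat) : T :=
  match n with
  | O => x
  | S k => mul (pow1 mul x k) x
  end.

Definition is_congruence {T : Type} (mul : T -> T -> T) (R : T -> T -> Prop) : Prop :=
  (forall x, R x x) /\ (forall x y, R x y -> R y x) /\
  (forall x y z, R x y -> R y z -> R x z) /\
  (forall x y c, R x y -> R (mul c x) (mul c y) /\ R (mul x c) (mul y c)).

Definition rel_incl {T : Type} (R1 R2 : T -> T -> Prop) : Prop :=
  forall x y, R1 x y -> R2 x y.

Definition delta_semigroup {T : Type} (mul : T -> T -> T) : Prop :=
  associative mul /\
  forall R1 R2, is_congruence mul R1 -> is_congruence mul R2 ->
    rel_incl R1 R2 \/ rel_incl R2 R1.

Definition T2R {T : Type} (mul : T -> T -> T) (S0 : T -> Prop) (z u v : T) : Prop :=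
  delta_semigroup mul /\
  (forall x, S0 x \/ x = u \/ x = v) /\ ~ S0 u /\ ~ S0 v /\ u <> v /\
  (forall a x, S0 a -> S0 (mul a x) /\ S0 (mul x a)) /\
  S0 z /\ (forall a, S0 a -> mul z a = z /\ mul a z = z) /\
  (forall a, S0 a -> exists n, pow1 mul a n = z) /\
  (exists a, S0 a /\ a <> z) /\
  mul u u = u /\ mul u v = v /\ mul v u = u /\ mul v v = v.

(* Main.v *)
Require Import Defs.
From Stdlib Require Import Classical.

Lemma pow1_idem {T : Type} (mul : T -> T -> T) (e : T) :
  mul e e = e -> forall n, pow1 mul e n = e.
Proof. intros H n; induction n; simpl; [reflexivity| rewrite IHn; exact H]. Qed.

Theorem proposition6 (T : Type) (mul : T -> T -> T) (S0 : T -> Prop) (z u v : T) :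
  T2R mul S0 z u v ->
  exists b, S0 b /\ mul u b <> b /\ mul v b <> b.
Proof.
  intros [[Hassoc Hch] [Hcov [Hu [Hv [Hneq [Hid [Hz [Hzero [Hnil [[a [Ha Haz]] [Huu [Huv' [Hvu Hvv]]]]]]]]]]]]].
  apply NNPP; intro Hne.
  assert (E : forall b, S0 b -> mul u b = b /\ mul v b = b).
  { intros b Hb.
    destruct (classic (mul u b = b)) as [E1|E1].
    - split; auto. rewrite <- E1 at 1. rewrite Hassoc, Hvu. exact E1.
    - destruct (classic (mul v b = b)) as [E2|E2].
      + exfalso. apply E1. rewrite <- E2 at 1. rewrite Hassoc, Huv'. exact E2.
      + exfalso. apply Hne. exists b. auto. }
  clear Hne.
  set (sig := fun x y => forall s, mul x s = mul y s).
  set (rho := fun x y => x = y \/ (S0 x /\ S0 y)).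
  assert (Csig : is_congruence mul sig).
  { unfold sig; refine (conj _ (conj _ (conj _ _))).
    - auto.
    - intros x y H s; auto.
    - intros x y w H1 H2 s; rewrite H1; auto.
    - intros x y c H; split; intros s; rewrite <- !Hassoc, H; reflexivity. }
  assert (Crho : is_congruence mul rho).
  { unfold rho; refine (conj _ (conj _ (conj _ _))).
    - auto.
    - intros x y [H|[H1 H2]]; auto.
    - intros x y w [H|[H1 H2]] [H'|[H1' H2']]; subst; intuition.
    - intros x y c [H|[H1 H2]]; split; first [subst; auto; fail | right; split; first [apply (proj1 (Hid _ _ H1)) | apply (proj2 (Hid _ _ H1)) | apply (proj1 (Hid _ _ H2)) | apply (proj2 (Hid _ _ H2))]]. }
  assert (Suv : sig u v).
  { intro s. destruct (Hcov s) as [Hs|[Hs|Hs]].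
    - destruct (E s Hs) as [E1 E2]; congruence.
    - subst; congruence.
    - subst; congruence. }
  assert (Null : forall x s, S0 x -> mul x s = z).
  { destruct (Hch _ _ Crho Csig) as [I|I].
    - intros x s Hx. assert (sig x z) as Hs by (apply I; right; auto).
      rewrite (Hs s).
      assert (Zw : forall w, mul w z = z -> mul z w = z).
      { intros w Hwz.
        assert (Hw : mul (mul z w) (mul z w) = mul z w).
        { rewrite <- (Hassoc z w (mul z w)), (Hassoc w z w), Hwz, Hassoc,
            (proj1 (Hzero z Hz)); reflexivity. }
        destruct (Hnil (mul z w) (proj1 (Hid z w Hz))) as [n Hn].
        rewrite (pow1_idem _ _ Hw) in Hn; exact Hn. }
      destruct (Hcov s) as [H|[H|H]]; [apply (proj1 (Hzero s H))| |];
      subst; apply Zw; apply E; auto.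
    - exfalso. destruct (I u v Suv) as [H|[H _]]; auto. }
  set (t1 := fun x y => x = y \/ (x = a /\ y = z) \/ (x = z /\ y = a)).
  set (t2 := fun x y => x = y \/ (x = u /\ y = v) \/ (x = v /\ y = u)).
  assert (Muz : mul u z = z) by (apply E; auto).
  assert (Mvz : mul v z = z) by (apply E; auto).
  assert (C1 : is_congruence mul t1).
  { unfold t1; refine (conj _ (conj _ (conj _ _))).
    - auto.
    - intros x y [<-|[[-> ->]|[-> ->]]]; [left|right;right|right;left]; auto.
    - intros x y w [<-|[[-> ->]|[-> ->]]] [<-|[[H1 ->]|[H1 ->]]]; auto; try (left; reflexivity); try (right; left; split; reflexivity); try (right; right; split; reflexivity); exfalso; congruence.
    - intros x y c H; split; destruct H as [<-|[[-> ->]|[-> ->]]];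
      try (left; reflexivity);
      try (left; rewrite !(Null _ c); auto; fail);
      destruct (Hcov c) as [Hc|[ -> | -> ]];
      try (left; rewrite !(Null c); auto; fail);
      destruct (E a Ha); [right; left | right; left | right; right | right; right];
      split; congruence. }
  assert (C2 : is_congruence mul t2).
  { unfold t2; refine (conj _ (conj _ (conj _ _))).
    - auto.
    - intros x y [<-|[[-> ->]|[-> ->]]]; [left|right;right|right;left]; auto.
    - intros x y w [<-|[[-> ->]|[-> ->]]] [<-|[[H1 ->]|[H1 ->]]]; auto; try (left; reflexivity); try (right; left; split; reflexivity); try (right; right; split; reflexivity); exfalso; congruence.
    - intros x y c H; split; destruct H as [<-|[[-> ->]|[-> ->]]];
      try (left; reflexivity);
      destruct (Hcov c) as [Hc|[ -> | -> ]];
      try (left; rewrite !(Null c); auto; fail);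
      try (destruct (E c Hc); left; congruence);
      try (left; congruence);
      [right; left | right; left | right; right | right; right];
      split; congruence. }
  destruct (Hch _ _ C1 C2) as [I|I].
  - destruct (I a z) as [H|[[H1 H2]|[H1 H2]]]; unfold t1; auto; subst; auto.
  - destruct (I u v) as [H|[[H1 H2]|[H1 H2]]]; unfold t2; auto; subst; auto.
Qed.
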